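(* Let $X=(B\,|\,A)\in\mathbb{Z}^{d\times N}$ be a matrix of full rank $d$ in $B$-basic form, with $B\in\mathbb{Z}^{d\times d}$ a diagonal matrix of full rank with non-negative entries and $A\in\mathbb{Z}^{d\times(N-d)}$. Let $P=\{p_1,\dots,p_{N-\kappa(A)}\}$ be a coordinatizing path and $\sigma\in\{-1,1\}^{N-\kappa(A)}$. If $X'=(B\,|\,A')$ and $X''=(B\,|\,A'')$ both represent the same arithmetic matroid as $X$ and, for every $j$, the entries of $A'$ and of $A''$ at position $p_j$ both equal $\sigma_j$ times the corresponding entry of $A$, then $X'=X''$.
   Context: The arithmetic matroid represented by $X\in\mathbb{Z}^{d\times N}$ with columns $x_1,\dots,x_N$ is $([N],\operatorname{rk},m)$ where $\operatorname{rk}(S)$ is the dimension of the real span $\langle S\rangle_{\mathbb{R}}$ of $\{x_e:e\in S\}$ and $m(S)=|(\langle S\rangle_{\mathbb{R}}\cap\mathbb{Z}^d)/\langle S\rangle|$, with $\langle S\rangle$ the subgroup generated by $\{x_e:e\in S\}$. Index the columns of $A$ by $d+1,\dots,N$. Let $\mathcal{G}_A$ be the bipartite graph on vertices $\{r_1,\dots,r_d\}\cup\{c_{d+1},\dots,c_N\}$ with an edge $\{r_i,c_j\}$ iff $a_{ij}\ne 0$; edges are identified with the non-zero entries of $A$. $\kappa(A)$ is the number of connected components of $\mathcal{G}_A$. A coordinatizing path is the set of entries of $A$ corresponding to the edges of a spanning forest of $\mathcal{G}_A$. *)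

(* Defs.v *)
From HB Require Import structures.
From mathcomp Require Import all_boot all_order all_algebra.
From mathcomp Require Import Rstruct.
Set Implicit Arguments. Unset Strict Implicit. Unset Printing Implicit Defensive.
Import Order.TTheory GRing.Theory Num.Theory.
Local Open Scope ring_scope.

Notation realR := Rdefinitions.R.

Definition mxR (m n : nat) (M : 'M[int]_(m, n)) : 'M[realR]_(m, n) :=
  map_mx (fun z : int => z%:~R) M.

Section ArithmeticMatroid.
Variables (d N : nat) (X : 'M[int]_(d, N)).

Definition xcol (e : 'I_N) : 'cV[int]_d := col e X.

Definition arith_rk (S : {set 'I_N}) : nat :=
  \rank (\matrix_(e < N, i < d) if e \in S then (X i e)%:~R else (0 : realR)).

Definition in_real_span (S : {set 'I_N}) (v : 'cV[int]_d) : Prop :=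
  exists c : 'I_N -> realR, mxR v = \sum_(e in S) c e *: mxR (xcol e).

Definition in_subgroup (S : {set 'I_N}) (v : 'cV[int]_d) : Prop :=
  exists c : 'I_N -> int, v = \sum_(e in S) c e *: xcol e.

(* "m(S) = k": the quotient group (<S>_R cap Z^d) / <S> has exactly k
   elements, i.e. there is a complete, irredundant list of k representatives
   of its cosets. *)
Definition is_arith_mult (S : {set 'I_N}) (k : nat) : Prop :=
  exists reps : seq 'cV[int]_d,
    [/\ size reps = k,
        (forall r, r \in reps -> in_real_span S r),
        (forall i j, (i < k)%N -> (j < k)%N ->
           in_subgroup S (nth 0 reps i - nth 0 reps j) -> i = j) &
        (forall v, in_real_span S v ->
           exists2 r, r \in reps & in_subgroup S (v - r))].

End ArithmeticMatroid.

Definition same_arith_matroid (d N : nat) (X Y : 'M[int]_(d, N)) : Prop :=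
  forall S : {set 'I_N},
    arith_rk X S = arith_rk Y S /\
    (forall k, is_arith_mult X S k <-> is_arith_mult Y S k).

Section BipartiteGraph.
Variables (d n : nat).

(* Vertices r_1..r_d (inl) and c_1..c_n (inr); an edge set E is a set of
   positions (i, j) of the matrix, the edge {r_i, c_j}. *)
Definition bip_adj (E : {set 'I_d * 'I_n}) : rel ('I_d + 'I_n) :=
  fun u v => match u, v with
             | inl i, inr j => (i, j) \in E
             | inr j, inl i => (i, j) \in E
             | _, _ => false
             end.

Definition GA_edges (A : 'M[int]_(d, n)) : {set 'I_d * 'I_n} :=
  [set p | A p.1 p.2 != 0].

Definition is_forest (E : {set 'I_d * 'I_n}) : Prop :=
  ~ exists c : seq ('I_d + 'I_n), (3 <= size c)%N /\ ucycle (bip_adj E) c.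

(* P is a coordinatizing path of A: the entries of A corresponding to the
   edges of a spanning forest of G_A (a subgraph of G_A on all vertices,
   without cycles, with the same connected components as G_A). *)
Definition coordinatizing_path (A : 'M[int]_(d, n)) (P : {set 'I_d * 'I_n})
  : Prop :=
  [/\ P \subset GA_edges A,
      is_forest P &
      forall u v, connect (bip_adj (GA_edges A)) u v = connect (bip_adj P) u v].

End BipartiteGraph.

(* Main.v *)
Require Import Defs.
From HB Require Import structures.
From mathcomp Require Import all_boot all_order all_algebra.
From mathcomp Require Import Rstruct.
Import Order.TTheory GRing.Theory Num.Theory.
Local Open Scope ring_scope.
From mathcomp Require Import all_fingroup zify ring.
From Stdlib Require Import Classical ClassicalEpsilon.
Set Implicit Arguments. Unset Strict Implicit. Unset Printing Implicit Defensive.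
Definition inlat d (M : 'M[int]_d) (v : 'cV[int]_d) := exists z : 'cV[int]_d, v = M *m z.

Lemma inlatB d (M : 'M[int]_d) u v : inlat M u -> inlat M v -> inlat M (u - v).
Proof. by move=> [z1 ->] [z2 ->]; exists (z1 - z2); rewrite mulmxBr. Qed.

Lemma absz_prod d (F : 'I_d -> int) : absz (\prod_i F i) = (\prod_i absz (F i))%N.
Proof. by rewrite (big_morph absz abszM (id1:=1) (id2:=1%N) (erefl 1%N)). Qed.

Lemma unit_absz (x : int) : x \is a GRing.unit -> absz x = 1%N.
Proof. rewrite unfold_in; by move=>/orP[]/eqP->. Qed.

Lemma count_le (T : Type) (x0 : T) (eqv : T -> T -> Prop) (r1 r2 : seq T) :
  (forall a b c, eqv a c -> eqv b c -> eqv a b) ->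
  (forall i j, (i < size r1)%N -> (j < size r1)%N -> eqv (nth x0 r1 i) (nth x0 r1 j) -> i = j) ->
  (forall i, (i < size r1)%N -> exists2 j, (j < size r2)%N & eqv (nth x0 r1 i) (nth x0 r2 j)) ->
  (size r1 <= size r2)%N.
Proof.
move=> tr irr cmp.
have H : forall i : 'I_(size r1), {j : 'I_(size r2) | eqv (nth x0 r1 i) (nth x0 r2 j)}.
  move=> i; apply: constructive_indefinite_description.
  case: (cmp i (ltn_ord i)) => j hj e; by exists (Ordinal hj).
have inj : injective (fun i => proj1_sig (H i)).
  move=> i i' e; apply: val_inj; apply: irr; try exact: ltn_ord.
  case: (H i) e => j hj; case: (H i') => j' hj' /= e; subst j'.
  exact: tr hj hj'.
by have := leq_card _ inj; rewrite !card_ord.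
Qed.

Lemma lat_index d (M : 'M[int]_d) : \det M != 0 ->
  exists reps : seq 'cV[int]_d, [/\ size reps = absz (\det M),
    (forall i j, (i < size reps)%N -> (j < size reps)%N ->
        inlat M (nth 0 reps i - nth 0 reps j) -> i = j) &
    (forall v, exists2 r, r \in reps & inlat M (v - r))].
Proof.
move=> detM0.
case: (int_Smith_normal_form M) => L uL [R uR [s _ eM]].
set D := \matrix_(i, j) _ in eM.
have eD : D = diag_mx (\row_i s`_i) by apply/matrixP => i j; rewrite !mxE.
have detM : \det M = \det L * (\prod_(i < d) s`_i) * \det R.
  by rewrite eM !det_mulmx eD det_diag; congr (_ * _ * _); apply: eq_bigr => i _; rewrite mxE.
have sn0 : forall i : 'I_d, s`_i != 0.
  move=> i; apply: contraNneq detM0 => si0.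
  by rewrite detM (bigD1 i) //= si0 mul0r mulr0 mul0r.
pose m (i : 'I_d) := absz s`_i.
have mpos : forall i, (0 < m i)%N by move=> i; rewrite /m absz_gt0.
have absdet : absz (\det M) = (\prod_i m i)%N.
  rewrite detM !abszM absz_prod.
  by rewrite unit_absz -?unitmxE // unit_absz -?unitmxE // mul1n muln1.
pose fT := {dffun forall i : 'I_d, 'I_(m i)}.
pose w (f : fT) : 'cV[int]_d := \col_i ((f i : nat)%:Z).
exists [seq L *m w f | f <- enum fT]; split.
- rewrite size_map -cardE card_dep_ffun foldrE big_map absdet big_enum /=.
  by apply: eq_bigr => i _; rewrite card_ord.
- move=> i j; rewrite size_map => hi hj.
  have [f0 _] : exists f0 : fT, True by case: (enum fT) hi => [|x ?] //; exists x.
  rewrite (nth_map f0 _ _ hi) (nth_map f0 _ _ hj) => -[z ez].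
  have ew : w (nth f0 (enum fT) i) - w (nth f0 (enum fT) j) = D *m (R *m z).
    by rewrite -(mulKmx uL (_ - _)) mulmxBr ez eM !mulmxA mulVmx // mul1mx.
  apply/eqP; rewrite -(nth_uniq f0 hi hj (enum_uniq _)); apply/eqP.
  apply/ffunP => t; apply: val_inj.
  set y := R *m z in ew.
  move/matrixP: ew => /(_ t 0); rewrite eD mul_diag_mx !mxE.
  move: (nth f0 (enum fT) i t) (nth f0 (enum fT) j t) => a b /=.
  have := ltn_ord a; have := ltn_ord b; rewrite /m.
  move: (nat_of_ord a) (nat_of_ord b) (sn0 t) (y t 0) => x x' sn yy; move: (\sum_(j0 < d) _) => Y h1 h2 h3.
  have hY : Y = 0.
    apply/eqP; apply: contraT => hY.
    have : (absz (s`_t)%R <= absz (s`_t * Y)%R)%N.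
      by rewrite abszM; apply: leq_pmulr; rewrite absz_gt0.
    move: (s`_t * Y)%R h3 => P h3 h4; lia.
  move: h3; rewrite hY mulr0; lia.
- move=> v.
  have [ww eww] : {ww : 'cV[int]_d | ww = invmx L *m v} by exists (invmx L *m v).
  have hlt : forall t : 'I_d, (absz (ww t ord0 %% s`_t)%Z < m t)%N.
    move=> t; have := modz_ge0 (ww t ord0) (sn0 t); have := ltz_mod (ww t ord0) (sn0 t).
    rewrite /m; move: (_ %% _)%Z => a; lia.
  pose fv : fT := finfun (fun t => (Ordinal (hlt t) : 'I_(m t))).
  exists (L *m w fv); first by apply: map_f; rewrite mem_enum.
  pose y : 'cV[int]_d := \col_t (ww t ord0 %/ s`_t)%Z.
  have ewy : ww - w fv = D *m y.
    apply/matrixP => t c; rewrite (ord1 c) eD mul_diag_mx !mxE ffunE /=.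
    rewrite gez0_abs ?modz_ge0 //.
    by rewrite {1}(divz_eq (ww t ord0) s`_t) addrK mulrC.
  exists (invmx R *m y).
  rewrite eM -!mulmxA mulKVmx // -ewy mulmxBr eww mulKVmx //.
Qed.
Definition Mg d N (X : 'M[int]_(d, N)) (g : 'I_d -> 'I_N) : 'M[int]_d :=
  \matrix_(i, j) X i (g j).

Lemma bigsetT (R : Type) (idx : R) (op : Monoid.com_law idx) (T : finType) (F : T -> R) :
  \big[op/idx]_(i in [set: T]) F i = \big[op/idx]_i F i.
Proof. by apply: eq_bigl => i; rewrite in_setT. Qed.

Section Conv.
Variables (d N : nat) (X : 'M[int]_(d, N)) (g : 'I_d -> 'I_N).
Hypothesis ginj : injective g.

Lemma ginjin : {in setT &, injective g}.
Proof. by move=> x y _ _; apply: ginj. Qed.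

Lemma subgroupE v : in_subgroup X (g @: setT) v <-> inlat (Mg X g) v.
Proof.
split.
- move=> [c ->]; exists (\col_j c (g j)).
  rewrite big_imset /=; last exact: ginjin.
  rewrite bigsetT.
  apply/matrixP => i k; rewrite summxE !mxE; apply: eq_bigr => j _.
  by rewrite /xcol !mxE mulrC ?(ord1 k).
- move=> [z ->].
  exists (fun e => if [pick j | g j == e] is Some j then z j 0 else 0).
  rewrite big_imset /=; last exact: ginjin.
  rewrite bigsetT.
  apply/matrixP => i k; rewrite summxE !mxE; apply: eq_bigr => j _.
  case: pickP => [j' /eqP/ginj -> | /(_ j)]; last by rewrite eqxx.
  by rewrite /xcol !mxE mulrC ?(ord1 k).
Qed.

Lemma detR (M : 'M[int]_d) : \det (mxR M) = (\det M)%:~R.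
Proof. by rewrite /mxR det_map_mx. Qed.

Lemma unitR (M : 'M[int]_d) : (mxR M \in unitmx) = (\det M != 0).
Proof. by rewrite unitmxE detR unitfE intr_eq0. Qed.

Lemma realspan_all : \det (Mg X g) != 0 -> forall v, in_real_span X (g @: setT) v.
Proof.
move=> dn0 v; have uM : mxR (Mg X g) \in unitmx by rewrite unitR.
set w := invmx (mxR (Mg X g)) *m mxR v.
exists (fun e => if [pick j | g j == e] is Some j then w j 0 else 0).
rewrite big_imset /=; last exact: ginjin.
  rewrite bigsetT.
have -> : mxR v = mxR (Mg X g) *m w by rewrite /w mulKVmx.
apply/matrixP => i k; rewrite summxE !mxE; apply: eq_bigr => j _.
case: pickP => [j' /eqP/ginj -> | /(_ j)]; last by rewrite eqxx.
by rewrite /xcol !mxE mulrC ?(ord1 k).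
Qed.

Lemma rk_eq : arith_rk X (g @: setT) = \rank (mxR (Mg X g)).
Proof.
rewrite /arith_rk; set Z := \matrix_(e < N, i < d) _.
set Sel : 'M[realR]_(N, d) := \matrix_(e, j) (e == g j)%:R.
have e1 : Z = Sel *m (mxR (Mg X g))^T.
  apply/matrixP => e i; rewrite !mxE.
  case: ifP => [/imsetP[j _ ->] | he].
    rewrite (bigD1 j) //= big1 ?addr0 => [|j' nj]; rewrite !mxE ?eqxx ?mul1r //.
    by rewrite (inj_eq ginj) eq_sym (negbTE nj) mul0r.
  rewrite big1 // => j _; rewrite !mxE; case: eqP => [ej|]; last by rewrite mul0r.
  by move: he; rewrite ej imset_f.
have e2 : (mxR (Mg X g))^T = Sel^T *m Z.
  apply/matrixP => j i; rewrite !mxE (bigD1 (g j)) //= big1 ?addr0 => [|e ne]; rewrite !mxE.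
    by rewrite eqxx imset_f // mul1r.
  by rewrite (negbTE ne) mul0r.
apply/eqP; rewrite eqn_leq; apply/andP; split.
  by rewrite e1; apply: leq_trans (mxrankM_maxr _ _) _; rewrite mxrank_tr.
by rewrite -mxrank_tr e2 mxrankM_maxr.
Qed.

Lemma mult_char : \det (Mg X g) != 0 ->
  forall k, is_arith_mult X (g @: setT) k <-> k = absz (\det (Mg X g)).
Proof.
move=> dn0 k.
have [reps0 [sz0 irr0 cmp0]] := lat_index dn0.
have tr : forall a b c : 'cV[int]_d, inlat (Mg X g) (a - c) -> inlat (Mg X g) (b - c) ->
    inlat (Mg X g) (a - b).
  move=> a b c h1 h2; have := inlatB h1 h2.
  by have -> : a - c - (b - c) = a - b by rewrite opprB addrA subrK.
split.
- move=> [reps [sz rsp irr cmp]].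
  apply/eqP; rewrite eqn_leq -sz -sz0; apply/andP; split.
  + apply: (@count_le _ 0 (fun a b => inlat (Mg X g) (a - b))).
    move=> a b c h1 h2; exact: (tr a b c h1 h2).
      move=> i j hi hj /subgroupE; rewrite sz in hi hj; exact: irr.
    move=> i hi; have [r rin hr] := cmp0 (nth 0 reps i).
    exists (index r reps0); first by rewrite index_mem.
    by rewrite nth_index.
  + apply: (@count_le _ 0 (fun a b => inlat (Mg X g) (a - b))).
      move=> a b c h1 h2; exact: (tr a b c h1 h2).
      exact: irr0.
    move=> i hi; have [r rin /subgroupE hr] := cmp (nth 0 reps0 i) (realspan_all dn0 _).
    exists (index r reps); first by rewrite index_mem.
    by rewrite nth_index.
- move=> ->; exists reps0; split => //.
  + by move=> r _; apply: realspan_all.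
  + move=> i j hi hj /subgroupE; rewrite -sz0 in hi hj; exact: irr0.
  + move=> v _; have [r rin hr] := cmp0 v; exists r => //; exact/subgroupE.
Qed.

End Conv.

Lemma L1 d N (X Y : 'M[int]_(d, N)) (g : 'I_d -> 'I_N) :
  same_arith_matroid X Y -> injective g ->
  absz (\det (Mg X g)) = absz (\det (Mg Y g)).
Proof.
move=> sm ginj; have [hrk hm] := sm (g @: setT).
rewrite !rk_eq // in hrk.
have hdet : (\det (Mg X g) != 0) = (\det (Mg Y g) != 0).
  by rewrite -!unitR -!row_free_unit /row_free hrk.
case: (boolP (\det (Mg X g) != 0)) => hX.
  have hY : \det (Mg Y g) != 0 by rewrite -hdet.
  have := (mult_char ginj hX (absz (\det (Mg X g)))).2 erefl.
  by move/hm/(mult_char ginj hY).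
have hY : ~~ (\det (Mg Y g) != 0) by rewrite -hdet.
by move: hX hY; rewrite !negbK => /eqP -> /eqP ->.
Qed.
Lemma det_two n (M : 'M[int]_n) (s1 s2 : 'S_n) : s1 != s2 ->
  (forall s : 'S_n, s != s1 -> s != s2 -> \prod_i M (s i) i = 0) ->
  \det M = (-1) ^+ s1 * \prod_i M (s1 i) i + (-1) ^+ s2 * \prod_i M (s2 i) i.
Proof.
move=> ne h; rewrite -det_tr /determinant (bigD1 s1) //= (bigD1 s2) 1?eq_sym //=.
rewrite addrA [X in _ + X]big1 ?addr0.
  by congr (_ * _ + _ * _); apply: eq_bigr => i _; rewrite mxE.
move=> s /andP[n1 n2].
by rewrite (eq_bigr (fun i => M (s i) i)) ?h ?mulr0 // => i _; rewrite mxE.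
Qed.

Section Cycle.
Variables (d n k : nat) (B : 'M[int]_d) (rs : nat -> 'I_d) (cs : nat -> 'I_n).
Hypothesis Bdiag : forall i j : 'I_d, i != j -> B i j = 0.
Hypothesis Bnz : forall i : 'I_d, B i i != 0.
Hypothesis k2 : (1 < k)%N.
Hypothesis rsinj : forall s t, (s < k)%N -> (t < k)%N -> rs s = rs t -> s = t.
Hypothesis csinj : forall s t, (s < k)%N -> (t < k)%N -> cs s = cs t -> s = t.

Definition rsq := mkseq rs k.

Lemma rsq_uniq : uniq rsq.
Proof. by apply/mkseq_uniqP => s t hs ht; apply: rsinj. Qed.

Lemma mem_rs t : (t < k)%N -> rs t \in rsq.
Proof. by move=> ht; rewrite -(nth_mkseq (rs 0) rs ht) mem_nth // size_mkseq. Qed.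

Lemma idx_rs t : (t < k)%N -> index (rs t) rsq = t.
Proof.
move=> ht; rewrite -(nth_mkseq (rs 0) rs ht) index_uniq // ?size_mkseq //.
exact: rsq_uniq.
Qed.

Lemma inrsP j : j \in rsq -> exists2 t, (t < k)%N & j = rs t.
Proof.
move=> hj; exists (index j rsq); first by rewrite -(size_mkseq rs k) index_mem.
have hi : (index j rsq < k)%N by rewrite -(size_mkseq rs k) index_mem.
by rewrite -(nth_mkseq (rs 0) rs hi) nth_index.
Qed.

Definition gslot (j : 'I_d) : 'I_(d + n) :=
  if j \in rsq then rshift d (cs (index j rsq)) else lshift n j.

Lemma gslot_inj : injective gslot.
Proof.
move=> j1 j2; rewrite /gslot.
case: (boolP (j1 \in rsq)) => h1; case: (boolP (j2 \in rsq)) => h2.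
- move=> /rshift_inj.
  have [t1 ht1 ->] := inrsP h1; have [t2 ht2 ->] := inrsP h2.
  by rewrite !idx_rs // => /csinj -> .
- move/(congr1 val) => /=; have := ltn_ord j2; lia.
- move/(congr1 val) => /=; have := ltn_ord j1; lia.
- exact: lshift_inj.
Qed.

Definition pidx t := if t == 0%N then k.-1 else t.-1.

Definition rhof (j : 'I_d) : 'I_d :=
  if j \in rsq then rs (pidx (index j rsq)) else j.

Lemma rhof_inj : injective rhof.
Proof.
have pk : forall t, (t < k)%N -> (pidx t < k)%N by move=> t; rewrite /pidx; case: eqP; lia.
move=> j1 j2; rewrite /rhof.
case: (boolP (j1 \in rsq)) => h1; case: (boolP (j2 \in rsq)) => h2.
- have [t1 ht1 ->] := inrsP h1; have [t2 ht2 ->] := inrsP h2.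
  rewrite !idx_rs // => /rsinj; rewrite !pk // => /(_ isT isT) hp.
  by congr rs; move: hp; rewrite /pidx; do 2 case: eqP; lia.
- have [t1 ht1 ->] := inrsP h1; rewrite idx_rs // => e.
  by have := mem_rs (pk _ ht1); rewrite e (negbTE h2).
- have [t2 ht2 ->] := inrsP h2; rewrite idx_rs // => e.
  by have := mem_rs (pk _ ht2); rewrite -e (negbTE h1).
- by [].
Qed.

Definition rho : 'S_d := perm rhof_inj.

Lemma rho_rs t : (t < k)%N -> rho (rs t) = rs (pidx t).
Proof. by move=> ht; rewrite permE /rhof mem_rs // idx_rs. Qed.

Lemma rho_out j : j \notin rsq -> rho j = j.
Proof. by move=> hj; rewrite permE /rhof (negbTE hj). Qed.

Lemma rho_n1 : rho != 1%g.
Proof.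
apply/eqP => /permP /(_ (rs 0)); rewrite rho_rs ?perm1; last lia.
move/rsinj; rewrite /pidx /=; lia.
Qed.

Section OneA.
Variable A : 'M[int]_(d, n).
Hypothesis chord : forall s t, (s < k)%N -> (t < k)%N -> A (rs s) (cs t) != 0 ->
  [\/ t = s, t = s.+1 | (t = 0 /\ s = k.-1)]%N.

Definition MA := Mg (row_mx B A) gslot.

Lemma MA_rs i t : (t < k)%N -> MA i (rs t) = A i (cs t).
Proof. by move=> ht; rewrite /MA /Mg mxE /gslot mem_rs // idx_rs // row_mxEr. Qed.

Lemma MA_out i j : j \notin rsq -> MA i j = B i j.
Proof. by move=> hj; rewrite /MA /Mg mxE /gslot (negbTE hj) row_mxEl. Qed.

Lemma survivors (s : 'S_d) : (forall j, MA (s j) j != 0) -> s = 1%g \/ s = rho.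
Proof.
move=> hnz.
have hout : forall j, j \notin rsq -> s j = j.
  move=> j hj; apply/eqP; apply: contraR (hnz j) => ne.
  by rewrite MA_out // Bdiag.
have hin : forall t, (t < k)%N -> exists2 u, (u < k)%N & s (rs t) = rs u.
  move=> t ht; case: (boolP (s (rs t) \in rsq)) => [/inrsP [u hu e]|ho].
    by exists u.
  have := hout _ ho; move/perm_inj => e; move: ho; rewrite e mem_rs //.
have hch : forall t u, (t < k)%N -> (u < k)%N -> s (rs t) = rs u ->
    [\/ t = u, t = u.+1 | (t = 0 /\ u = k.-1)]%N.
  move=> t u ht hu e; apply: chord => //; by move: (hnz (rs t)); rewrite e MA_rs.
have [u0 hu0 e0] := hin 0%N ltac:(lia).
have [] := hch 0%N u0 ltac:(lia) hu0 e0; [move=> h0 | lia | move=> [_ h0]].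
- left; subst u0.
  have all : forall t, (t < k)%N -> s (rs t) = rs t.
    elim=> [|t IH] ht //.
    have [u hu e] := hin t.+1 ht.
    have [] := hch t.+1 u ht hu e.
    + move=> eu; rewrite e; congr rs; lia.
    + move=> eu; have eu' : u = t by lia.
      subst u; move: e; rewrite -IH ?(ltnW ht) // => /perm_inj/rsinj; lia.
    + lia.
  apply/permP => j; rewrite perm1.
  case: (boolP (j \in rsq)) => [/inrsP [t ht ->]|]; [exact: all | exact: hout].
- right; subst u0.
  have down : forall m, (m < k.-1)%N -> s (rs (k.-1 - m)%N) = rs (k.-1 - m)%N.-1.
    elim=> [|m IH] hm.
      have [u hu e] := hin k.-1 ltac:(lia).
      rewrite subn0; have [] := hch k.-1 u ltac:(lia) hu e.
      + move=> eu; subst u; move: e; rewrite -{2}e0 => /perm_inj/rsinj; lia.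
      + move=> eu; rewrite e; congr rs; lia.
      + lia.
    have [u hu e] := hin (k.-1 - m.+1)%N ltac:(lia).
    have [] := hch (k.-1 - m.+1)%N u ltac:(lia) hu e.
    + move=> eu; have := IH ltac:(lia).
      have -> : ((k.-1 - m).-1 = k.-1 - m.+1)%N by lia.
      rewrite {1}eu -e => /perm_inj/rsinj; lia.
    + move=> eu; rewrite e; congr rs; lia.
    + lia.
  apply/permP => j.
  case: (boolP (j \in rsq)) => [/inrsP [t ht ->]|ho]; last by rewrite hout // rho_out.
  rewrite rho_rs // /pidx; case: eqP => [->|nt]; first by rewrite e0.
  have := down (k.-1 - t)%N ltac:(lia).
  by have -> : (k.-1 - (k.-1 - t) = t)%N by lia.
Qed.

Lemma det_MA : \det MA = \prod_j MA j j + (-1) ^+ rho * \prod_j MA (rho j) j.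
Proof.
rewrite (det_two (s1 := 1%g) (s2 := rho)); first by rewrite odd_perm1 mul1r;
  congr (_ + _); apply: eq_bigr => j _; rewrite perm1.
  by rewrite eq_sym rho_n1.
move=> s n1 n2; apply/eqP; apply: contraT => /prodf_neq0 h.
have := survivors (fun j => h j isT); case=> e; by rewrite e eqxx in n1 n2.
Qed.

End OneA.

Lemma absz_contra (a b : int) : a != 0 -> b != 0 -> absz (a + b) != absz (a - b).
Proof. move=> ha hb; apply/eqP => h; nia. Qed.

Lemma cycle_contra (A1 A2 : 'M[int]_(d, n)) :
  (forall s t, (s < k)%N -> (t < k)%N -> A1 (rs s) (cs t) != 0 ->
    [\/ t = s, t = s.+1 | (t = 0 /\ s = k.-1)]%N) ->
  (forall s t, (s < k)%N -> (t < k)%N -> A2 (rs s) (cs t) != 0 ->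
    [\/ t = s, t = s.+1 | (t = 0 /\ s = k.-1)]%N) ->
  (forall t, (t < k)%N -> A1 (rs t) (cs t) = A2 (rs t) (cs t) /\ A1 (rs t) (cs t) != 0) ->
  (forall t, (t.+1 < k)%N -> A1 (rs t) (cs t.+1) = A2 (rs t) (cs t.+1) /\
      A1 (rs t) (cs t.+1) != 0) ->
  A1 (rs k.-1) (cs 0) != 0 -> A2 (rs k.-1) (cs 0) = - A1 (rs k.-1) (cs 0) ->
  absz (\det (MA A1)) != absz (\det (MA A2)).
Proof.
move=> ch1 ch2 p1 p2 enz eneg.
rewrite !det_MA //.
have eT1 : \prod_j MA A2 j j = \prod_j MA A1 j j.
  apply: eq_bigr => j _; case: (boolP (j \in rsq)) => [/inrsP [t ht ->]|ho].
    by rewrite !MA_rs // (p1 t ht).1.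
  by rewrite !MA_out.
have hrest : forall A : 'M[int]_(d, n), \prod_(j | j != rs 0) MA A (rho j) j =
    \prod_(j | j != rs 0) (if j \in rsq then A (rs (index j rsq).-1) (cs (index j rsq)) else B j j).
  move=> A; apply: eq_bigr => j nj; case: (boolP (j \in rsq)) => [hj|ho].
    move: (hj) nj => /inrsP [t ht ->] nj.
    rewrite rho_rs // MA_rs // idx_rs // /pidx; case: eqP => // t0.
    by move: nj; rewrite t0 eqxx.
  by rewrite rho_out // MA_out.
have eT2 : \prod_j MA A2 (rho j) j = - \prod_j MA A1 (rho j) j.
  rewrite (bigD1 (rs 0)) //= [in RHS](bigD1 (rs 0)) //= !hrest.
  rewrite !rho_rs ?MA_rs /pidx //= ?eneg ?mulNr //; try lia.
  congr (- (_ * _)); apply: eq_bigr => j nj; case: ifP => // hj.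
  move: (hj) nj => /inrsP [t ht ->] nj; rewrite idx_rs //.
  have t0 : t != 0%N by apply: contraNneq nj => ->.
  have := (p2 t.-1 ltac:(lia)).1; rewrite prednK ?lt0n // => ->.
have nT1 : \prod_j MA A1 j j != 0.
  apply/prodf_neq0 => j _; case: (boolP (j \in rsq)) => [/inrsP [t ht ->]|ho].
    by rewrite MA_rs // (p1 t ht).2.
  by rewrite MA_out.
have nT2 : \prod_j MA A1 (rho j) j != 0.
  apply/prodf_neq0 => j _; case: (boolP (j \in rsq)) => [/inrsP [t ht ->]|ho].
    rewrite rho_rs // MA_rs // /pidx; case: (t =P 0%N) => [t0|t0]; first by rewrite t0.
    by have := (p2 t.-1 ltac:(lia)).2; rewrite prednK // lt0n; apply/eqP.
  by rewrite rho_out // MA_out.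
rewrite eT1 eT2 mulrN.
by apply: absz_contra => //; rewrite mulf_neq0 // signr_eq0.
Qed.
End Cycle.
Lemma ex_min (P : nat -> Prop) : (exists n, P n) -> exists n, P n /\ forall m, P m -> (n <= m)%N.
Proof.
move=> [n0 hn0].
suff H : forall N n, (n <= N)%N -> P n -> exists n, P n /\ forall m, P m -> (n <= m)%N.
  exact: (H n0 n0 (leqnn _) hn0).
elim=> [|N IH] n hn hp.
  exists n; split => // m _; move: hn; lia.
case: (classic (exists m, (m < n)%N /\ P m)) => [[m [hm pm]]|no].
  apply: (IH m) => //; lia.
exists n; split => // m pm; case: (leqP n m) => // hlt; exfalso; apply: no; by exists m.
Qed.

Definition walk (T : Type) (h : T -> T -> bool) (x y : T) (L : nat) :=
  exists f : nat -> T, [/\ f 0%N = x, f L = y & forall t, (t < L)%N -> h (f t) (f t.+1)].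

Lemma connect_walk (T : finType) (h : rel T) x y : connect h x y -> exists L, walk h x y L.
Proof.
move/connectP => [p hp ->]; exists (size p), (fun t => nth x (x :: p) t); split => //.
  by rewrite (last_nth x).
by move=> t ht; move/(pathP x): hp => /(_ t ht).
Qed.

Lemma walk_mono (T : Type) (h h' : T -> T -> bool) x y L :
  (forall u v, h u v -> h' u v) -> walk h x y L -> walk h' x y L.
Proof. by move=> hh [f [f0 fL fs]]; exists f; split => // t ht; apply: hh; apply: fs. Qed.

Section WalkF.
Variables (T : Type) (h : T -> T -> bool) (f : nat -> T) (L : nat).
Hypothesis fs : forall t, (t < L)%N -> h (f t) (f t.+1).

Lemma walk_sub a b : (a <= b <= L)%N -> walk h (f a) (f b) (b - a).
Proof.
move=> /andP[hab hbL]; exists (fun t => f (a + t)); split.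
- by rewrite addn0.
- by congr f; lia.
- move=> t ht; have -> : (a + t.+1 = (a + t).+1)%N by lia.
  apply: fs; lia.
Qed.

Lemma walk_rev : (forall u v, h u v -> h v u) -> walk h (f L) (f 0%N) L.
Proof.
move=> hsym; exists (fun t => f (L - t)); split.
- by rewrite subn0.
- by rewrite subnn.
- move=> t ht; apply: hsym.
  have -> : (L - t = (L - t.+1).+1)%N by lia.
  apply: fs; lia.
Qed.

Lemma walk_splice_eq a b : (a < b <= L)%N -> f a = f b -> walk h (f 0%N) (f L) (L - (b - a)).
Proof.
move=> /andP[hab hbL] e; exists (fun t => if (t <= a)%N then f t else f (t + (b - a))); split.
- by [].
- case: ifP => hle; last by congr f; lia.
  have -> : (L - (b - a) = a)%N by lia.
  by rewrite e; congr f; lia.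
- move=> t; case: (ltngtP t a) => [hta|hta|->] ht.
  + apply: fs; lia.
  + have -> : (t.+1 + (b - a) = (t + (b - a)).+1)%N by lia.
    apply: fs; lia.
  + rewrite e.
    have -> : (a.+1 + (b - a) = b.+1)%N by lia.
    apply: fs; lia.
Qed.

Lemma walk_splice_edge a b : (a < b <= L)%N -> h (f a) (f b) ->
  walk h (f 0%N) (f L) ((L - (b - a)).+1).
Proof.
move=> /andP[hab hbL] e; exists (fun t => if (t <= a)%N then f t else f (t + (b - a)).-1); split.
- by [].
- case: ifP => hle; first lia.
  by congr f; lia.
- move=> t; case: (ltngtP t a) => [hta|hta|->] ht.
  + apply: fs; lia.
  + have -> : ((t.+1 + (b - a)).-1 = ((t + (b - a)).-1).+1)%N by lia.
    apply: fs; lia.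
  + by have -> : ((a.+1 + (b - a)).-1 = b)%N by lia.
Qed.

End WalkF.
Lemma det_one n (M : 'M[int]_n) :
  (forall s : 'S_n, s != 1%g -> \prod_i M (s i) i = 0) -> \det M = \prod_i M i i.
Proof.
move=> h; rewrite -det_tr /determinant (bigD1 1%g) //= [X in _ + X]big1 ?addr0.
  by rewrite odd_perm1 mul1r; apply: eq_bigr => i _; rewrite mxE perm1.
move=> s ns.
by rewrite (eq_bigr (fun i => M (s i) i)) ?h ?mulr0 // => i _; rewrite mxE.
Qed.

Section Mag.
Variables (d n : nat) (B : 'M[int]_d).
Hypothesis Bdiag : forall i j : 'I_d, i != j -> B i j = 0.
Hypothesis Bnz : forall i : 'I_d, B i i != 0.

Definition gone (i : 'I_d) (j : 'I_n) (t : 'I_d) : 'I_(d + n) :=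
  if t == i then rshift d j else lshift n t.

Lemma gone_inj i j : injective (gone i j).
Proof.
move=> t1 t2; rewrite /gone; case: eqP => [->|n1]; case: eqP => [->|n2] //.
- move/(congr1 val) => /=; have := ltn_ord t2; lia.
- move/(congr1 val) => /=; have := ltn_ord t1; lia.
- exact: lshift_inj.
Qed.

Lemma det_gone (A : 'M[int]_(d, n)) i j :
  \det (Mg (row_mx B A) (gone i j)) = A i j * \prod_(t | t != i) B t t.
Proof.
have ME : forall r t, Mg (row_mx B A) (gone i j) r t = if t == i then A r j else B r t.
  by move=> r t; rewrite /Mg mxE /gone; case: eqP => _; rewrite ?row_mxEr ?row_mxEl.
rewrite det_one.
  rewrite (bigD1 i) //= ME eqxx; congr (_ * _); apply: eq_bigr => t nt.
  by rewrite ME (negbTE nt).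
move=> s ns; apply/eqP; apply: contraT => /prodf_neq0 hnz.
have fix1 : forall t, t != i -> s t = t.
  move=> t nt; move: (hnz t isT); rewrite ME (negbTE nt).
  by apply: contraNeq => /Bdiag ->.
have fixi : s i = i.
  apply/eqP; apply: contraT => ni; have := fix1 _ ni.
  by move/perm_inj => e; move: ni; rewrite e eqxx.
move: ns; rewrite eq_sym => /eqP; case; apply/permP => t; rewrite perm1.
by case: (t =P i) => [->|/eqP nt]; rewrite ?fixi ?fix1.
Qed.

Lemma mag (A A2 : 'M[int]_(d, n)) :
  same_arith_matroid (row_mx B A) (row_mx B A2) -> forall i j, absz (A2 i j) = absz (A i j).
Proof.
move=> sm i j; have := L1 sm (gone_inj (i:=i) (j:=j)); rewrite !det_gone !abszM => e.
have c0 : (0 < absz (\prod_(t | t != i) B t t)%R)%N.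
  by rewrite absz_gt0; apply/prodf_neq0 => t _.
by apply/eqP; rewrite -(eqn_pmul2r c0) e.
Qed.
End Mag.

Definition isr (d n : nat) (v : 'I_d + 'I_n) := if v is inr _ then true else false.

Lemma bip_adjP d n (E : {set 'I_d * 'I_n}) u v : bip_adj E u v ->
  exists i j, (i, j) \in E /\ ((u = inl i /\ v = inr j) \/ (u = inr j /\ v = inl i)).
Proof.
case: u => [i|j]; case: v => [i'|j'] //= h.
- by exists i, j'; split => //; left.
- by exists i', j; split => //; right.
Qed.

Lemma bip_adj_sym d n (E : {set 'I_d * 'I_n}) u v : bip_adj E u v -> bip_adj E v u.
Proof. by case: u => ?; case: v => ?. Qed.

Lemma bip_adj_par d n (E : {set 'I_d * 'I_n}) u v : bip_adj E u v -> isr v = ~~ isr u.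
Proof. by case: u => ?; case: v => ?. Qed.

Unset Implicit Arguments.
Theorem lemma3p5 (d n : nat) (B : 'M[int]_(d, d)) (A A' A'' : 'M[int]_(d, n))
    (P : {set 'I_d * 'I_n}) (sigma : 'I_d * 'I_n -> int) :
  (forall i j : 'I_d, i != j -> B i j = 0) ->
  (forall i j : 'I_d, 0 <= B i j) ->
  \rank (mxR B) = d ->
  arith_rk (row_mx B A) setT = d ->
  coordinatizing_path A P ->
  (forall p, p \in P -> sigma p = 1 \/ sigma p = -1) ->
  same_arith_matroid (row_mx B A) (row_mx B A') ->
  same_arith_matroid (row_mx B A) (row_mx B A'') ->
  (forall p, p \in P -> A' p.1 p.2 = sigma p * A p.1 p.2) ->
  (forall p, p \in P -> A'' p.1 p.2 = sigma p * A p.1 p.2) ->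
  row_mx B A' = row_mx B A''.
Proof.
move=> Bdiag _ rkB _ [PsubG _ Pconn] sig sm1 sm2 hA1 hA2.
have Bnz : forall i, B i i != 0.
  have eB : B = diag_mx (\row_i B i i).
    apply/matrixP => i j; rewrite !mxE; case: (i =P j) => [->|ne]; first by rewrite mulr1n.
    by rewrite mulr0n Bdiag //; apply/eqP.
  have uB : \det B != 0 by rewrite -unitR -row_free_unit /row_free rkB.
  move=> i; move: uB; rewrite {1}eB det_diag => /prodf_neq0 /(_ i isT).
  by rewrite mxE.
have mag1 := mag Bdiag Bnz sm1.
have mag2 := mag Bdiag Bnz sm2.
have sm12 : forall g, injective g ->
    absz (\det (Mg (row_mx B A') g)) = absz (\det (Mg (row_mx B A'') g)).
  by move=> g gi; rewrite -(L1 sm1 gi) (L1 sm2 gi).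
have supp : forall i j, (A'' i j != 0) = (A' i j != 0).
  by move=> i j; rewrite -!absz_eq0 mag1 mag2.
have suppA : forall i j, (A' i j != 0) = (A i j != 0).
  by move=> i j; rewrite -!absz_eq0 mag1.
have undet_nz : forall i j, A' i j != A'' i j -> A' i j != 0.
  move=> i j; move: (mag1 i j) (mag2 i j); lia.
congr row_mx; apply/matrixP => i0 j0.
case: (A' i0 j0 =P A'' i0 j0) => // /eqP hne0; exfalso.
set Dset := [set p : 'I_d * 'I_n | (A' p.1 p.2 != 0) && (A' p.1 p.2 == A'' p.1 p.2)].
have PD : forall p, p \in P -> p \in Dset.
  move=> [i j] hp; rewrite inE /=.
  have hA : A i j != 0 by move: (subsetP PsubG _ hp); rewrite inE.
  rewrite (hA1 _ hp) (hA2 _ hp) /= eqxx andbT.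
  by case: (sig _ hp) => ->; rewrite ?mul1r ?mulN1r ?oppr_eq0.
have undet_walk : forall i j, A' i j != A'' i j ->
    exists L, walk (bip_adj Dset) (inr j) (inl i) L.
  move=> i j hne.
  have nz : A i j != 0 by rewrite -suppA undet_nz.
  have c : connect (bip_adj (GA_edges A)) (inr j) (inl i) by apply: connect1; rewrite /= inE.
  rewrite Pconn in c.
  have [L w] := connect_walk c; exists L; apply: walk_mono w => u v.
  by case: u => ?; case: v => ? //=; apply: PD.
have [L [[i1 [j1 [hne1 w1]]] Lmin]] : exists L,
    (exists i j, A' i j != A'' i j /\ walk (bip_adj Dset) (inr j) (inl i) L) /\
    forall m, (exists i j, A' i j != A'' i j /\ walk (bip_adj Dset) (inr j) (inl i) m) ->
      (L <= m)%N.
  apply: ex_min; have [L w] := undet_walk _ _ hne0; exists L, i0, j0; by split.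
case: w1 => f [f0 fL fs].
have F1 : forall a b, (a < b)%N -> (b <= L)%N -> f a = f b -> False.
  move=> a b h1 h2 e.
  have hab : (a < b <= L)%N by rewrite h1 h2.
  have := walk_splice_eq fs hab e; rewrite f0 fL => w.
  have : (L <= L - (b - a))%N by apply: Lmin; exists i1, j1.
  lia.
have F2 : forall a b, (a.+1 < b)%N -> (b <= L)%N -> bip_adj Dset (f a) (f b) -> False.
  move=> a b h1 h2 e.
  have hab : (a < b <= L)%N by apply/andP; split; lia.
  have := walk_splice_edge fs hab e; rewrite f0 fL => w.
  have : (L <= (L - (b - a)).+1)%N by apply: Lmin; exists i1, j1.
  lia.
have F3 : forall a b, (a < b)%N -> (b <= L)%N -> bip_adj (GA_edges A') (f a) (f b) ->
    b = a.+1 \/ (a = 0%N /\ b = L).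
  move=> a b h1 h2 /bip_adjP [i [j [hij hor]]].
  rewrite inE /= in hij.
  case: (eqVneq (A' i j) (A'' i j)) => [eq|neq].
    have hD : (i, j) \in Dset by rewrite inE /= hij eq eqxx.
    have hadj : bip_adj Dset (f a) (f b) by case: hor => [[-> ->]|[-> ->]].
    case: (b =P a.+1) => [->|nb]; first by left.
    by exfalso; apply: (F2 a b) => //; lia.
  have hab : (a <= b <= L)%N by apply/andP; split; lia.
  have [g [g0 gL gs]] := walk_sub fs hab.
  have w : walk (bip_adj Dset) (inr j) (inl i) (b - a).
    case: hor => [[ea eb]|[ea eb]].
      have := walk_rev gs (@bip_adj_sym _ _ Dset); by rewrite gL g0 ea eb.
    by exists g; rewrite g0 gL ea eb.
  have : (L <= b - a)%N by apply: Lmin; exists i, j.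
  lia.
have hpar : forall t, (t <= L)%N -> isr (f t) = ~~ odd t.
  elim=> [|t IH] ht; first by rewrite f0.
  by rewrite (bip_adj_par (fs t ht)) IH ?(ltnW ht) //=.
have oddL : odd L by move: (hpar L (leqnn _)); rewrite fL /=; case: (odd L).
have [m eL] : exists m, L = m.*2.+1.
  exists L./2; have := odd_double_half L; rewrite oddL /=.
  move: (L./2) => h; lia.
have m0 : m != 0%N.
  apply/eqP => m0; move: (fs 0%N); rewrite eL m0 f0 /= => /(_ isT).
  have -> : f 1%N = inl i1 by rewrite -fL eL m0.
  by rewrite /= inE /= => /andP[_]; rewrite (negbTE hne1).
pose k := m.+1.
pose rs t := if f t.*2.+1 is inl i then i else i1.
pose cs t := if f t.*2 is inr j then j else j1.
have hfl : forall t, (t < k)%N -> f t.*2.+1 = inl (rs t).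
  move=> t ht; have := hpar t.*2.+1 ltac:(lia); rewrite /= odd_double /rs.
  by case: (f _).
have hfr : forall t, (t < k)%N -> f t.*2 = inr (cs t).
  move=> t ht; have := hpar t.*2 ltac:(lia); rewrite odd_double /cs.
  by case: (f _).
have rsinj : forall s t, (s < k)%N -> (t < k)%N -> rs s = rs t -> s = t.
  move=> s t hs ht e; have e' : f s.*2.+1 = f t.*2.+1 by rewrite hfl // hfl // e.
  case: (ltngtP s t) => // h; exfalso.
    by apply: (F1 s.*2.+1 t.*2.+1) => //; lia.
  by apply: (F1 t.*2.+1 s.*2.+1) => //; lia.
have csinj : forall s t, (s < k)%N -> (t < k)%N -> cs s = cs t -> s = t.
  move=> s t hs ht e; have e' : f s.*2 = f t.*2 by rewrite hfr // hfr // e.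
  case: (ltngtP s t) => // h; exfalso.
    by apply: (F1 s.*2 t.*2) => //; lia.
  by apply: (F1 t.*2 s.*2) => //; lia.
have chord : forall s t, (s < k)%N -> (t < k)%N -> A' (rs s) (cs t) != 0 ->
    [\/ t = s, t = s.+1 | (t = 0 /\ s = k.-1)]%N.
  move=> s t hs ht nz.
  case: (leqP t s) => hts.
    have := F3 t.*2 s.*2.+1 ltac:(lia) ltac:(lia).
    rewrite hfl // hfr // /= inE /= nz => /(_ isT) [] h; first by constructor 1; lia.
    by constructor 3; lia.
  have := F3 s.*2.+1 t.*2 ltac:(lia) ltac:(lia).
  rewrite hfl // hfr // /= inE /= nz => /(_ isT) [] h; first by constructor 2; lia.
  lia.
have chord2 : forall s t, (s < k)%N -> (t < k)%N -> A'' (rs s) (cs t) != 0 ->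
    [\/ t = s, t = s.+1 | (t = 0 /\ s = k.-1)]%N.
  by move=> s t hs ht; rewrite supp; apply: chord.
have pe1 : forall t, (t < k)%N -> A' (rs t) (cs t) = A'' (rs t) (cs t) /\ A' (rs t) (cs t) != 0.
  move=> t ht; have := fs t.*2 ltac:(lia); rewrite hfr // hfl //= inE /=.
  by case/andP => -> /eqP ->.
have pe2 : forall t, (t.+1 < k)%N -> A' (rs t) (cs t.+1) = A'' (rs t) (cs t.+1) /\
    A' (rs t) (cs t.+1) != 0.
  move=> t ht; have := fs t.*2.+1 ltac:(lia).
  rewrite hfl ?(ltn_trans (ltnSn t)) // -doubleS hfr //= inE /=.
  by case/andP => -> /eqP ->.
have erow : rs k.-1 = i1.
  by have := hfl k.-1 (ltnSn m); rewrite /= -eL fL => -[].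
have ecol : cs 0%N = j1.
  by have := hfr 0%N isT; rewrite /= f0 => -[].
have k2 : (1 < k)%N by rewrite /k; lia.
have hnz1 : A' (rs k.-1) (cs 0%N) != 0 by rewrite erow ecol undet_nz.
have hneg : A'' (rs k.-1) (cs 0%N) = - A' (rs k.-1) (cs 0%N).
  rewrite erow ecol; move: (mag1 i1 j1) (mag2 i1 j1) hne1; lia.
have := cycle_contra Bdiag Bnz k2 rsinj chord chord2 pe1 pe2 hnz1 hneg.
by rewrite /MA (sm12 _ (gslot_inj k2 rsinj csinj)) eqxx.
Qed.
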